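(* For every open localic groupoid $G$ we have $\mathcal G(\mathcal O(G))\cong G$, and for every groupoid quantale $Q$ we have $\mathcal O(\mathcal G(Q))\cong Q$.
   Context: Groupoid quantales: for a locale $A$, an $A$-$A$-bimodule is a sup-lattice $M$ with actions $a\triangleright m$, $m\triangleleft a$ preserving joins in each variable, with $1_A\triangleright m=m$, $(a\wedge b)\triangleright m=a\triangleright(b\triangleright m)$, $m\triangleleft1_A=m$, $m\triangleleft(a\wedge b)=(m\triangleleft a)\triangleleft b$, $(a\triangleright m)\triangleleft b=a\triangleright(m\triangleleft b)$. An $A$-$A$-quantale is such a $Q$ with associative join-preserving multiplication and $(a\triangleright x)y=a\triangleright(xy)$, $(x\triangleleft a)y=x(a\triangleright y)$, $(xy)\triangleleft a=x(y\triangleleft a)$; involutive if there is a join-preserving $x\mapsto x^*$ with $x^{**}=x$, $(xy)^*=y^*x^*$, $(a\triangleright(x\triangleleft b))^*=b\triangleright(x^*\triangleleft a)$. A support is a join-preserving $\varsigma:Q\to A$ with $\varsigma(1_Q)=1_A$, $\varsigma(x)\triangleright y\le xx^*y$, $\varsigma(x)\triangleright x=x$; equivariant if $\varsigma(a\triangleright x)=a\wedge\varsigma(x)$. A based quantal frame is an involutive $A$-$A$-quantale that is a frame with $(a\triangleright x)\wedge y=a\triangleright(x\wedge y)$, $(x\triangleleft a)\wedge y=(x\wedge y)\triangleleft a$; reflexive: a frame homomorphism $\upsilon:Q\to A$ with $\upsilon(a\triangleright1_Q)=a=\upsilon(1_Q\triangleleft a)$. $Q\otimes_AQ$ is $Q\otimes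 Q$ modulo $x\otimes(a\triangleright y)=(x\triangleleft a)\otimes y$; multiplicative: the right adjoint of the induced $\mu_A:Q\otimes_AQ\to Q$ preserves joins. Unit laws: $\bigvee_{xy\le a}\upsilon(x)\triangleright y=a$; inverse law: $\upsilon(a)\triangleright1_Q=\bigvee_{xy^*\le a}x\wedge y$. A groupoid quantale is a multiplicative equivariantly supported reflexive based quantal frame satisfying both laws. $\mathcal G(Q)$ is the open localic groupoid with $\mathcal O(G_0)=A$, $\mathcal O(G_1)=Q$, $d^*(a)=a\triangleright1_Q$, $i^*(x)=x^*$, $r=d\circ i$, $u^*=\upsilon$, $\mathcal O(G_2)=Q\otimes_AQ$, $m^*(a)=\bigvee_{xy\le a}x\otimes y$. For an open localic groupoid $G$ (domain map $d$ open), $\mathcal O(G)$ is $\mathcal O(G_1)$ with multiplication $\mathcal O(G_1)\otimes\mathcal O(G_1)\to\mathcal O(G_2)\xrightarrow{m_!}\mathcal O(G_1)$, involution $i_!$, actions of $\mathcal O(G_0)$ given by $a\triangleright q=d^*(a)\wedge q$ and $q\triangleleft a=r^*(a)\wedge q$, support $d_!$, and $\upsilon=u^*$; it is a groupoid quantale. *)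

(* Defs.v *)
(* Frames, locales (as frames, with maps
   given by their inverse-image frame homomorphisms), open localic groupoids,
   groupoid quantales, and the constructions O(-) and G(-). *)

Record Frame := {
  fcar :> Type;
  fle : fcar -> fcar -> Prop;
  fsup : (fcar -> Prop) -> fcar;
  fmeet : fcar -> fcar -> fcar;
  fle_refl : forall x, fle x x;
  fle_trans : forall x y z, fle x y -> fle y z -> fle x z;
  fle_antisym : forall x y, fle x y -> fle y x -> x = y;
  fsup_ub : forall (P : fcar -> Prop) x, P x -> fle x (fsup P);
  fsup_lub : forall (P : fcar -> Prop) y, (forall x, P x -> fle x y) -> fle (fsup P) y;
  fmeet_glb : forall x y z, fle z (fmeet x y) <-> (fle z x /\ fle z y);
  fdistr : forall x (P : fcar -> Prop),
      fmeet x (fsup P) = fsup (fun z => exists y, P y /\ z = fmeet x y)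
}.
Arguments fle {f} _ _.
Arguments fsup {f} _.
Arguments fmeet {f} _ _.

Definition img {X Y : Type} (f : X -> Y) (P : X -> Prop) : Y -> Prop :=
  fun y => exists x, P x /\ y = f x.

Definition ftop (F : Frame) : F := @fsup F (fun _ => True).
Definition finf (F : Frame) (P : F -> Prop) : F :=
  @fsup F (fun z => forall x, P x -> fle z x).

Definition sup_preserving {A B : Frame} (f : A -> B) : Prop :=
  forall P : A -> Prop, f (fsup P) = fsup (img f P).

Definition frame_hom {A B : Frame} (f : A -> B) : Prop :=
  sup_preserving f /\ (forall x y, f (fmeet x y) = fmeet (f x) (f y))
  /\ f (ftop A) = ftop B.

Definition frame_iso {A B : Frame} (f : A -> B) : Prop :=
  frame_hom f /\ exists g : B -> A, (forall x, g (f x) = x) /\ (forall y, f (g y) = y).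

(* ---------- Tensor products over a base locale ----------
   Q (x)_A Q is realised (Joyal--Tierney) as the sup-lattice of subsets S of
   Q x Q that are down-closed, closed under joins in each variable separately,
   and saturated for the relation  (x <| a) (x) y = x (x) (a |> y);
   ordered by inclusion.  Joins are closures of unions, meets are intersections,
   and x (x) y corresponds to the closure of the down-set of (x,y). *)
Definition tsat {Q A : Frame} (ra : Q -> A -> Q) (la : A -> Q -> Q)
    (S : Q -> Q -> Prop) : Prop :=
  (forall x y x' y', S x y -> fle x' x -> fle y' y -> S x' y') /\
  (forall (P : Q -> Prop) y, (forall x, P x -> S x y) -> S (fsup P) y) /\
  (forall x (P : Q -> Prop), (forall y, P y -> S x y) -> S x (fsup P)) /\
  (forall x a y, S (ra x a) y <-> S x (la a y)).

Definition tcl {Q A : Frame} (ra : Q -> A -> Q) (la : A -> Q -> Q)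
    (R : Q -> Q -> Prop) : Q -> Q -> Prop :=
  fun x y => forall S, tsat ra la S -> (forall u v, R u v -> S u v) -> S x y.

Definition teq {Q : Type} (S T : Q -> Q -> Prop) : Prop :=
  forall x y, S x y <-> T x y.

Definition tsat3 {Q A : Frame} (ra : Q -> A -> Q) (la : A -> Q -> Q)
    (S : Q -> Q -> Q -> Prop) : Prop :=
  (forall x y z x' y' z', S x y z -> fle x' x -> fle y' y -> fle z' z -> S x' y' z') /\
  (forall (P : Q -> Prop) y z, (forall x, P x -> S x y z) -> S (fsup P) y z) /\
  (forall x (P : Q -> Prop) z, (forall y, P y -> S x y z) -> S x (fsup P) z) /\
  (forall x y (P : Q -> Prop), (forall z, P z -> S x y z) -> S x y (fsup P)) /\
  (forall x a y z, S (ra x a) y z <-> S x (la a y) z) /\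
  (forall x y a z, S x (ra y a) z <-> S x y (la a z)).

Definition tcl3 {Q A : Frame} (ra : Q -> A -> Q) (la : A -> Q -> Q)
    (R : Q -> Q -> Q -> Prop) : Q -> Q -> Q -> Prop :=
  fun x y z => forall S, tsat3 ra la S -> (forall u v w, R u v w -> S u v w) -> S x y z.

Definition teq3 {Q : Type} (S T : Q -> Q -> Q -> Prop) : Prop :=
  forall x y z, S x y z <-> T x y z.

(* ---------- Localic groupoids ----------
   Data given by inverse-image maps:  d*, r* : O(G0) -> O(G1),
   u* : O(G1) -> O(G0),  i* : O(G1) -> O(G1),
   m* : O(G1) -> O(G2),  O(G2) = O(G1) (x)_{O(G0)} O(G1) (pullback of r and d),
   with actions  q <| a = r*(a) /\ q  and  a |> q = d*(a) /\ q. *)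
Record LGData := {
  lg0 : Frame;
  lg1 : Frame;
  lg_d : fcar lg0 -> fcar lg1;
  lg_r : fcar lg0 -> fcar lg1;
  lg_u : fcar lg1 -> fcar lg0;
  lg_i : fcar lg1 -> fcar lg1;
  lg_m : fcar lg1 -> (fcar lg1 -> fcar lg1 -> Prop)
}.

Definition lg_ract (G : LGData) (x : lg1 G) (a : lg0 G) : lg1 G := fmeet (lg_r G a) x.
Definition lg_lact (G : LGData) (a : lg0 G) (y : lg1 G) : lg1 G := fmeet (lg_d G a) y.

(* inverse image of the pairing <f,g> : G1 -> G2 (f*, g* given), applied to an
   element S of O(G2):  <f,g>*(S) = \/ { f*(x) /\ g*(y) | x (x) y <= S } *)
Definition pair_map (G : LGData) (f g : lg1 G -> lg1 G) (S : lg1 G -> lg1 G -> Prop)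
  : lg1 G := fsup (fun z => exists x y, S x y /\ z = fmeet (f x) (g y)).

Definition open_map {A B : Frame} (f : A -> B) : Prop :=
  exists fl : B -> A, (forall x a, fle (fl x) a <-> fle x (f a)) /\
                      (forall x a, fl (fmeet x (f a)) = fmeet (fl x) a).

Definition localic_groupoid (G : LGData) : Prop :=
  let d := lg_d G in let r := lg_r G in let u := lg_u G in
  let i := lg_i G in let m := lg_m G in
  let ra := lg_ract G in let la := lg_lact G in
  frame_hom d /\ frame_hom r /\ frame_hom u /\ frame_hom i /\
  (* m* : O(G1) -> O(G2) is a frame homomorphism *)
  (forall a, tsat ra la (m a)) /\
  (forall P : lg1 G -> Prop, teq (m (fsup P)) (tcl ra la (fun x y => exists a, P a /\ m a x y))) /\
  (forall a b, teq (m (fmeet a b)) (fun x y => m a x y /\ m b x y)) /\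
  teq (m (ftop _)) (fun _ _ => True) /\
  (* d o u = id, r o u = id *)
  (forall a, u (d a) = a) /\ (forall a, u (r a) = a) /\
  (* d o i = r, r o i = d *)
  (forall a, i (d a) = r a) /\ (forall a, i (r a) = d a) /\
  (* d o m = d o pi1, r o m = r o pi2 *)
  (forall a, teq (m (d a)) (tcl ra la (fun x _ => fle x (d a)))) /\
  (forall a, teq (m (r a)) (tcl ra la (fun _ y => fle y (r a)))) /\
  (* unit laws: m o <u o d, id> = id, m o <id, u o r> = id *)
  (forall a, pair_map G (fun x => d (u x)) (fun y => y) (m a) = a) /\
  (forall a, pair_map G (fun x => x) (fun y => r (u y)) (m a) = a) /\
  (* inverse laws: m o <id, i> = u o d, m o <i, id> = u o r *)
  (forall a, pair_map G (fun x => x) i (m a) = d (u a)) /\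
  (forall a, pair_map G i (fun y => y) (m a) = r (u a)) /\
  (* associativity: m o (m x id) = m o (id x m) : G3 -> G1 *)
  (forall a, teq3
     (tcl3 ra la (fun x y z => exists p q, m a p q /\ m p x y /\ fle z q))
     (tcl3 ra la (fun x y z => exists p q, m a p q /\ fle x p /\ m q y z))).

Definition open_localic_groupoid (G : LGData) : Prop :=
  localic_groupoid G /\ open_map (lg_d G).

Definition lg_iso (G H : LGData) : Prop :=
  exists (f0 : lg0 G -> lg0 H) (f1 : lg1 G -> lg1 H),
    frame_iso f0 /\ frame_iso f1 /\
    (forall a, f1 (lg_d G a) = lg_d H (f0 a)) /\
    (forall a, f1 (lg_r G a) = lg_r H (f0 a)) /\
    (forall x, f0 (lg_u G x) = lg_u H (f1 x)) /\
    (forall x, f1 (lg_i G x) = lg_i H (f1 x)) /\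
    (forall a x y, lg_m G a x y <-> lg_m H (f1 a) (f1 x) (f1 y)).

Record GQData := {
  qA : Frame;
  qQ : Frame;
  q_lact : fcar qA -> fcar qQ -> fcar qQ;
  q_ract : fcar qQ -> fcar qA -> fcar qQ;
  q_mul : fcar qQ -> fcar qQ -> fcar qQ;
  q_inv : fcar qQ -> fcar qQ;
  q_supp : fcar qQ -> fcar qA;
  q_ups : fcar qQ -> fcar qA
}.

Definition is_bimodule (Q : GQData) : Prop :=
  let la := q_lact Q in let ra := q_ract Q in
  (forall (P : qA Q -> Prop) m, la (fsup P) m = fsup (img (fun a => la a m) P)) /\
  (forall a (P : qQ Q -> Prop), la a (fsup P) = fsup (img (la a) P)) /\
  (forall m (P : qA Q -> Prop), ra m (fsup P) = fsup (img (ra m) P)) /\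
  (forall (P : qQ Q -> Prop) a, ra (fsup P) a = fsup (img (fun m => ra m a) P)) /\
  (forall m, la (ftop _) m = m) /\
  (forall a b m, la (fmeet a b) m = la a (la b m)) /\
  (forall m, ra m (ftop _) = m) /\
  (forall a b m, ra m (fmeet a b) = ra (ra m a) b) /\
  (forall a b m, ra (la a m) b = la a (ra m b)).

Definition is_AA_quantale (Q : GQData) : Prop :=
  let la := q_lact Q in let ra := q_ract Q in let mul := q_mul Q in
  is_bimodule Q /\
  (forall x y z, mul (mul x y) z = mul x (mul y z)) /\
  (forall (P : qQ Q -> Prop) y, mul (fsup P) y = fsup (img (fun x => mul x y) P)) /\
  (forall x (P : qQ Q -> Prop), mul x (fsup P) = fsup (img (mul x) P)) /\
  (forall a x y, mul (la a x) y = la a (mul x y)) /\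
  (forall a x y, mul (ra x a) y = mul x (la a y)) /\
  (forall a x y, ra (mul x y) a = mul x (ra y a)).

Definition is_involutive (Q : GQData) : Prop :=
  let inv := q_inv Q in
  is_AA_quantale Q /\ sup_preserving inv /\
  (forall x, inv (inv x) = x) /\
  (forall x y, inv (q_mul Q x y) = q_mul Q (inv y) (inv x)) /\
  (forall a b x, inv (q_lact Q a (q_ract Q x b)) = q_lact Q b (q_ract Q (inv x) a)).

Definition is_support (Q : GQData) : Prop :=
  let s := q_supp Q in
  sup_preserving s /\ s (ftop _) = ftop _ /\
  (forall x y, fle (q_lact Q (s x) y) (q_mul Q (q_mul Q x (q_inv Q x)) y)) /\
  (forall x, q_lact Q (s x) x = x).

Definition is_equivariant_support (Q : GQData) : Prop :=
  is_support Q /\ (forall a x, q_supp Q (q_lact Q a x) = fmeet a (q_supp Q x)).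

Definition based_quantal_frame (Q : GQData) : Prop :=
  is_involutive Q /\
  (forall a x y, fmeet (q_lact Q a x) y = q_lact Q a (fmeet x y)) /\
  (forall a x y, fmeet (q_ract Q x a) y = q_ract Q (fmeet x y) a).

Definition reflexive (Q : GQData) : Prop :=
  frame_hom (q_ups Q) /\
  (forall a, q_ups Q (q_lact Q a (ftop _)) = a) /\
  (forall a, q_ups Q (q_ract Q (ftop _) a) = a).

(* the right adjoint of mu_A : Q (x)_A Q -> Q sends a to {(x,y) | xy <= a};
   it preserves joins (joins in Q (x)_A Q are closures of unions) *)
Definition multiplicative (Q : GQData) : Prop :=
  forall P : qQ Q -> Prop,
    teq (fun x y => fle (q_mul Q x y) (fsup P))
        (tcl (q_ract Q) (q_lact Q) (fun x y => exists a, P a /\ fle (q_mul Q x y) a)).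

Definition unit_laws (Q : GQData) : Prop :=
  forall a : qQ Q,
    fsup (fun z => exists x y, fle (q_mul Q x y) a /\ z = q_lact Q (q_ups Q x) y) = a.

Definition inverse_law (Q : GQData) : Prop :=
  forall a : qQ Q,
    q_lact Q (q_ups Q a) (ftop _) =
    fsup (fun z => exists x y, fle (q_mul Q x (q_inv Q y)) a /\ z = fmeet x y).

Definition groupoid_quantale (Q : GQData) : Prop :=
  multiplicative Q /\ is_equivariant_support Q /\ reflexive Q /\
  based_quantal_frame Q /\ unit_laws Q /\ inverse_law Q.

Definition gq_iso (Q R : GQData) : Prop :=
  exists (f0 : qA Q -> qA R) (f1 : qQ Q -> qQ R),
    frame_iso f0 /\ frame_iso f1 /\
    (forall a x, f1 (q_lact Q a x) = q_lact R (f0 a) (f1 x)) /\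
    (forall x a, f1 (q_ract Q x a) = q_ract R (f1 x) (f0 a)) /\
    (forall x y, f1 (q_mul Q x y) = q_mul R (f1 x) (f1 y)) /\
    (forall x, f1 (q_inv Q x) = q_inv R (f1 x)) /\
    (forall x, f0 (q_supp Q x) = q_supp R (f1 x)) /\
    (forall x, f0 (q_ups Q x) = q_ups R (f1 x)).

(* O(G): multiplication m_!, involution i_!, support d_! (left adjoints,
   written as the infima that compute them), actions via d*, r*, upsilon = u* *)
Definition OG (G : LGData) : GQData := {|
  qA := lg0 G;
  qQ := lg1 G;
  q_lact := fun a q => fmeet (lg_d G a) q;
  q_ract := fun q a => fmeet (lg_r G a) q;
  q_mul := fun x y => finf (lg1 G) (fun z => lg_m G z x y);
  q_inv := fun x => finf (lg1 G) (fun z => fle x (lg_i G z));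
  q_supp := fun x => finf (lg0 G) (fun a => fle x (lg_d G a));
  q_ups := lg_u G
|}.

(* G(Q): d*(a) = a |> 1, i* = ( )^*, r = d o i, u* = upsilon,
   m*(a) = \/_{xy <= a} x (x) y = {(x,y) | xy <= a} *)
Definition GG (Q : GQData) : LGData := {|
  lg0 := qA Q;
  lg1 := qQ Q;
  lg_d := fun a => q_lact Q a (ftop _);
  lg_r := fun a => q_inv Q (q_lact Q a (ftop _));
  lg_u := q_ups Q;
  lg_i := q_inv Q;
  lg_m := fun a x y => fle (q_mul Q x y) a
|}.

(* Main.v *)
Require Import Defs.
From Stdlib Require Import ProofIrrelevance FunctionalExtensionality PropExtensionality.

Section FrameLemmas.
Context {F : Frame}.
Implicit Types x y z c : F.

Lemma le_refl x : fle x x. Proof. exact (fle_refl F x). Qed.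
Lemma le_trans x y z : fle x y -> fle y z -> fle x z. Proof. exact (fle_trans F x y z). Qed.
Lemma le_antisym x y : fle x y -> fle y x -> x = y. Proof. exact (fle_antisym F x y). Qed.
Lemma sup_ub (P : F -> Prop) x : P x -> fle x (fsup P). Proof. exact (fsup_ub F P x). Qed.
Lemma sup_lub (P : F -> Prop) y : (forall x, P x -> fle x y) -> fle (fsup P) y.
Proof. exact (fsup_lub F P y). Qed.
Lemma meet_l x y : fle (fmeet x y) x.
Proof. apply (proj1 (fmeet_glb F x y (fmeet x y)) (le_refl _)). Qed.
Lemma meet_r x y : fle (fmeet x y) y.
Proof. apply (proj1 (fmeet_glb F x y (fmeet x y)) (le_refl _)). Qed.
Lemma meet_intro x y z : fle z x -> fle z y -> fle z (fmeet x y).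
Proof. intros; apply (proj2 (fmeet_glb F x y z)); auto. Qed.
Lemma meet_comm x y : fmeet x y = fmeet y x.
Proof. apply le_antisym; apply meet_intro; (apply meet_l || apply meet_r). Qed.
Lemma meet_assoc x y z : fmeet (fmeet x y) z = fmeet x (fmeet y z).
Proof.
  apply le_antisym; repeat apply meet_intro;
  eauto using le_trans, meet_l, meet_r.
Qed.
Lemma meet_mono x x' y y' : fle x x' -> fle y y' -> fle (fmeet x y) (fmeet x' y').
Proof. intros; apply meet_intro; eauto using le_trans, meet_l, meet_r. Qed.
Lemma top_ub x : fle x (ftop F). Proof. apply sup_ub; exact I. Qed.
Lemma meet_absorb x y : fle x y -> fmeet x y = x.
Proof. intros; apply le_antisym; [apply meet_l| apply meet_intro; auto using le_refl]. Qed.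
Lemma meet_absorb' x y : fle x y -> fmeet y x = x.
Proof. intros; rewrite meet_comm; apply meet_absorb; auto. Qed.
Lemma meet_top_r x : fmeet x (ftop F) = x. Proof. apply meet_absorb, top_ub. Qed.
Lemma meet_top_l x : fmeet (ftop F) x = x. Proof. apply meet_absorb', top_ub. Qed.
Lemma meet_sup_le x (P : F -> Prop) c :
  (forall z, P z -> fle (fmeet x z) c) -> fle (fmeet x (fsup P)) c.
Proof.
  intros H; rewrite fdistr; apply sup_lub; intros w [y [Py ->]]; auto.
Qed.
Lemma sup_meet_le x (P : F -> Prop) c :
  (forall z, P z -> fle (fmeet z x) c) -> fle (fmeet (fsup P) x) c.
Proof.
  intros H; rewrite meet_comm; apply meet_sup_le; intros; rewrite meet_comm; auto.
Qed.
Lemma finf_lb (P : F -> Prop) z : P z -> fle (finf F P) z.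
Proof. intros Hz; unfold finf; apply sup_lub; intros w Hw; apply Hw; auto. Qed.
Lemma finf_glb (P : F -> Prop) w : (forall z, P z -> fle w z) -> fle w (finf F P).
Proof. intros H; unfold finf; apply sup_ub; auto. Qed.
Lemma finf_eq (P : F -> Prop) a : P a -> (forall z, P z -> fle a z) -> finf F P = a.
Proof. intros; apply le_antisym; [apply finf_lb; auto | apply finf_glb; auto]. Qed.
Lemma sup_eq_le (P : F -> Prop) y : P y -> (forall x, P x -> fle x y) -> fsup P = y.
Proof. intros; apply le_antisym; [apply sup_lub; auto | apply sup_ub; auto]. Qed.
End FrameLemmas.

Section HomLemmas.
Context {A B : Frame}.
Lemma sp_mono (f : A -> B) : sup_preserving f -> forall x y, fle x y -> fle (f x) (f y).
Proof.
  intros Hf x y Hxy.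
  assert (E : fsup (fun z => z = x \/ z = y) = y).
  { apply sup_eq_le; [right; reflexivity|]. intros z [->| ->]; auto using le_refl. }
  rewrite <- E, Hf. apply sup_ub. exists x; split; auto.
Qed.
Lemma fh_mono (f : A -> B) : frame_hom f -> forall x y, fle x y -> fle (f x) (f y).
Proof. intros [H _]; apply sp_mono; auto. Qed.
Lemma fh_meet (f : A -> B) : frame_hom f -> forall x y, f (fmeet x y) = fmeet (f x) (f y).
Proof. intros [_ [H _]]; auto. Qed.
Lemma fh_sup (f : A -> B) : frame_hom f -> sup_preserving f.
Proof. intros [H _]; auto. Qed.
Lemma fh_top (f : A -> B) : frame_hom f -> f (ftop A) = ftop B.
Proof. intros [_ [_ H]]; auto. Qed.
Lemma sp_sup_le (f : A -> B) (P : A -> Prop) c : sup_preserving f ->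
  (forall x, P x -> fle (f x) c) -> fle (f (fsup P)) c.
Proof. intros Hf H; rewrite Hf; apply sup_lub; intros z [x [Px ->]]; auto. Qed.
End HomLemmas.

Lemma fh_comp {A B C : Frame} (f : A -> B) (g : B -> C) :
  frame_hom f -> frame_hom g -> frame_hom (fun x => g (f x)).
Proof.
  intros Hf Hg; split; [|split].
  - intros P. rewrite (fh_sup f Hf), (fh_sup g Hg). apply le_antisym.
    + apply sup_lub. intros z [w [[x [Px ->]] ->]]. apply sup_ub. exists x; auto.
    + apply sup_lub. intros z [x [Px ->]]. apply sup_ub. exists (f x); split; auto. exists x; auto.
  - intros; rewrite (fh_meet f Hf), (fh_meet g Hg); auto.
  - rewrite (fh_top f Hf), (fh_top g Hg); auto.
Qed.
Lemma fh_id {A : Frame} : frame_hom (fun x : A => x).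
Proof.
  split; [|split]; auto. intros P. apply le_antisym.
  - apply sup_lub; intros x Px; apply sup_ub; exists x; auto.
  - apply sup_lub; intros z [x [Px ->]]; apply sup_ub; auto.
Qed.

Definition pairF {Q F : Frame} (f g : Q -> F) (S : Q -> Q -> Prop) : F :=
  fsup (fun z => exists x y, S x y /\ z = fmeet (f x) (g y)).
Definition pairF3 {Q F : Frame} (f g h : Q -> F) (S : Q -> Q -> Q -> Prop) : F :=
  fsup (fun z => exists x y w, S x y w /\ z = fmeet (fmeet (f x) (g y)) (h w)).

Section Pairing.
Context {Q F : Frame}.
Lemma pairF_ub (f g : Q -> F) (S : Q -> Q -> Prop) x y :
  S x y -> fle (fmeet (f x) (g y)) (pairF f g S).
Proof. intros; apply sup_ub; exists x, y; auto. Qed.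
Lemma pairF_lub (f g : Q -> F) (S : Q -> Q -> Prop) c :
  (forall x y, S x y -> fle (fmeet (f x) (g y)) c) -> fle (pairF f g S) c.
Proof. intros H; apply sup_lub; intros z [x [y [Sxy ->]]]; auto. Qed.
Lemma pairF_mono (f g : Q -> F) (S T : Q -> Q -> Prop) :
  (forall x y, S x y -> T x y) -> fle (pairF f g S) (pairF f g T).
Proof. intros H; apply pairF_lub; intros; apply pairF_ub; auto. Qed.
Lemma pairF_ext (f g f' g' : Q -> F) (S : Q -> Q -> Prop) :
  (forall x, f x = f' x) -> (forall y, g y = g' y) -> pairF f g S = pairF f' g' S.
Proof.
  intros H1 H2. apply functional_extensionality in H1. apply functional_extensionality in H2.
  subst; auto.
Qed.
Lemma pairF3_ub (f g h : Q -> F) S x y w :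
  S x y w -> fle (fmeet (fmeet (f x) (g y)) (h w)) (pairF3 f g h S).
Proof. intros; apply sup_ub; exists x, y, w; auto. Qed.
Lemma pairF3_lub (f g h : Q -> F) S c :
  (forall x y w, S x y w -> fle (fmeet (fmeet (f x) (g y)) (h w)) c) -> fle (pairF3 f g h S) c.
Proof. intros H; apply sup_lub; intros z [x [y [w [Sxy ->]]]]; eauto. Qed.
Lemma pairF3_mono (f g h : Q -> F) (S T : Q -> Q -> Q -> Prop) :
  (forall x y w, S x y w -> T x y w) -> fle (pairF3 f g h S) (pairF3 f g h T).
Proof. intros H; apply pairF3_lub; intros; apply pairF3_ub; auto. Qed.
End Pairing.

Lemma pairF_comp {Q F : Frame} (f g : Q -> Q) (h : Q -> F) S :
  frame_hom h -> h (pairF f g S) = pairF (fun x => h (f x)) (fun y => h (g y)) S.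
Proof.
  intros Hh. unfold pairF at 1. rewrite (fh_sup h Hh). apply le_antisym.
  - apply sup_lub; intros z [w [[x [y [Sxy ->]]] ->]].
    rewrite (fh_meet h Hh). apply (pairF_ub (fun x => h (f x)) (fun y => h (g y))); auto.
  - apply pairF_lub; intros x y Sxy. rewrite <- (fh_meet h Hh (f x) (g y)).
    apply sup_ub. exists (fmeet (f x) (g y)); split; auto. exists x, y; auto.
Qed.

Ltac ac_meet := apply le_antisym; repeat apply meet_intro;
  eauto 8 using le_trans, meet_l, meet_r, le_refl.

Section Groupoid.
Variable G : LGData.
Local Notation A := (lg0 G).
Local Notation Q := (lg1 G).
Local Notation d := (lg_d G).
Local Notation r := (lg_r G).
Local Notation u := (lg_u G).
Local Notation i := (lg_i G).
Local Notation m := (lg_m G).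
Local Notation ra := (lg_ract G).
Local Notation la := (lg_lact G).
Hypothesis HG : localic_groupoid G.

Ltac gd := let H := fresh in pose proof HG as H; unfold localic_groupoid in H;
  cbv zeta in H; decompose [and] H; assumption.

Lemma Hd : frame_hom d. Proof. gd. Qed.
Lemma Hr : frame_hom r. Proof. gd. Qed.
Lemma Hu : frame_hom u. Proof. gd. Qed.
Lemma Hi : frame_hom i. Proof. gd. Qed.
Lemma Hm_sat : forall a, tsat ra la (m a). Proof. gd. Qed.
Lemma Hm_meet : forall a b, teq (m (fmeet a b)) (fun x y => m a x y /\ m b x y). Proof. gd. Qed.
Lemma Hid : forall a, i (d a) = r a. Proof. gd. Qed.
Lemma Hir : forall a, i (r a) = d a. Proof. gd. Qed.
Lemma Hmr : forall a, teq (m (r a)) (tcl ra la (fun _ y => fle y (r a))). Proof. gd. Qed.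
Lemma Hunit_l : forall a, pair_map G (fun x => d (u x)) (fun y => y) (m a) = a. Proof. gd. Qed.
Lemma Hunit_r : forall a, pair_map G (fun x => x) (fun y => r (u y)) (m a) = a. Proof. gd. Qed.
Lemma Hinv_r : forall a, pair_map G (fun x => x) i (m a) = d (u a). Proof. gd. Qed.
Lemma Hinv_l : forall a, pair_map G i (fun y => y) (m a) = r (u a). Proof. gd. Qed.
Lemma Hassoc : forall a, teq3
     (tcl3 ra la (fun x y z => exists p q, m a p q /\ m p x y /\ fle z q))
     (tcl3 ra la (fun x y z => exists p q, m a p q /\ fle x p /\ m q y z)).
Proof. gd. Qed.

Lemma ra_eq x a : ra x a = fmeet (r a) x. Proof. reflexivity. Qed.
Lemma la_eq a y : la a y = fmeet (d a) y. Proof. reflexivity. Qed.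

Definition composable {F : Frame} (f g : Q -> F) := forall c, f (r c) = g (d c).

Lemma tsat_le {F : Frame} (f g : Q -> F) c0 :
  frame_hom f -> frame_hom g -> composable f g ->
  tsat ra la (fun x y => fle (fmeet (f x) (g y)) c0).
Proof.
  intros Hf Hg Hc; split; [|split; [|split]].
  - intros x y x' y' H1 H2 H3. eapply le_trans; [|exact H1].
    apply meet_mono; apply fh_mono; auto.
  - intros P y H. rewrite (fh_sup f Hf). apply sup_meet_le.
    intros z [x [Px ->]]; auto.
  - intros x P H. rewrite (fh_sup g Hg). apply meet_sup_le.
    intros z [y [Py ->]]; auto.
  - intros x a y. rewrite ra_eq, la_eq, (fh_meet f Hf), (fh_meet g Hg), Hc.
    assert (E : fmeet (fmeet (g (d a)) (f x)) (g y) = fmeet (f x) (fmeet (g (d a)) (g y)))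
      by ac_meet.
    rewrite E; tauto.
Qed.

Lemma tcl_incl R x y : R x y -> tcl ra la R x y.
Proof. intros H S _ HR; auto. Qed.
Lemma tcl3_incl R x y z : R x y z -> tcl3 ra la R x y z.
Proof. intros H S _ HR; auto. Qed.

Lemma pairF_tcl {F : Frame} (f g : Q -> F) R :
  frame_hom f -> frame_hom g -> composable f g ->
  pairF f g (tcl ra la R) = pairF f g R.
Proof.
  intros Hf Hg Hc. apply le_antisym.
  - apply pairF_lub. intros x y H.
    apply (H (fun x y => fle (fmeet (f x) (g y)) (pairF f g R))).
    + apply tsat_le; auto.
    + intros; apply pairF_ub; auto.
  - apply pairF_mono; apply tcl_incl.
Qed.

Lemma tsat3_le {F : Frame} (f g h : Q -> F) c0 :
  frame_hom f -> frame_hom g -> frame_hom h -> composable f g -> composable g h ->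
  tsat3 ra la (fun x y z => fle (fmeet (fmeet (f x) (g y)) (h z)) c0).
Proof.
  intros Hf Hg Hh Hc1 Hc2; split; [|split; [|split; [|split; [|split]]]].
  - intros x y z x' y' z' H1 H2 H3 H4. eapply le_trans; [|exact H1].
    repeat apply meet_mono; apply fh_mono; auto.
  - intros P y z H. rewrite (fh_sup f Hf). rewrite meet_assoc. apply sup_meet_le.
    intros w [x [Px ->]]; rewrite <- meet_assoc; auto.
  - intros x P z H. rewrite (fh_sup g Hg). rewrite fdistr. apply sup_meet_le.
    intros w [v [[y [Py ->]] ->]]; auto.
  - intros x y P H. rewrite (fh_sup h Hh). apply meet_sup_le.
    intros w [z [Pz ->]]; auto.
  - intros x a y z. rewrite ra_eq, la_eq, (fh_meet f Hf), (fh_meet g Hg), Hc1.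
    assert (E : fmeet (fmeet (fmeet (g (d a)) (f x)) (g y)) (h z) =
                fmeet (fmeet (f x) (fmeet (g (d a)) (g y))) (h z)) by ac_meet.
    rewrite E; tauto.
  - intros x y a z. rewrite ra_eq, la_eq, (fh_meet g Hg), (fh_meet h Hh), Hc2.
    assert (E : fmeet (fmeet (f x) (fmeet (h (d a)) (g y))) (h z) =
                fmeet (fmeet (f x) (g y)) (fmeet (h (d a)) (h z))) by ac_meet.
    rewrite E; tauto.
Qed.

Lemma pairF3_tcl3 {F : Frame} (f g h : Q -> F) R :
  frame_hom f -> frame_hom g -> frame_hom h -> composable f g -> composable g h ->
  pairF3 f g h (tcl3 ra la R) = pairF3 f g h R.
Proof.
  intros Hf Hg Hh Hc1 Hc2. apply le_antisym.
  - apply pairF3_lub. intros x y z H.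
    apply (H (fun x y z => fle (fmeet (fmeet (f x) (g y)) (h z)) (pairF3 f g h R))).
    + apply tsat3_le; auto.
    + intros; apply pairF3_ub; auto.
  - apply pairF3_mono; apply tcl3_incl.
Qed.

Lemma assoc_F {F : Frame} (f g h : Q -> F) a :
  frame_hom f -> frame_hom g -> frame_hom h -> composable f g -> composable g h ->
  pairF (fun p => pairF f g (m p)) h (m a) = pairF f (fun q => pairF g h (m q)) (m a).
Proof.
  intros Hf Hg Hh Hc1 Hc2.
  set (R1 := fun x y z => exists p q, m a p q /\ m p x y /\ fle z q).
  set (R2 := fun x y z => exists p q, m a p q /\ fle x p /\ m q y z).
  assert (E1 : pairF (fun p => pairF f g (m p)) h (m a) = pairF3 f g h R1).
  { apply le_antisym.
    - apply pairF_lub; intros p q Hpq. unfold pairF. apply sup_meet_le.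
      intros z [x [y [Hxy ->]]]. apply pairF3_ub. exists p, q; split; auto; split; auto.
      apply le_refl.
    - apply pairF3_lub; intros x y z [p [q [Hpq [Hxy Hzq]]]].
      eapply le_trans; [|apply (pairF_ub (fun p => pairF f g (m p)) h (m a) p q Hpq)].
      apply meet_mono; [apply pairF_ub; auto | apply fh_mono; auto]. }
  assert (E2 : pairF f (fun q => pairF g h (m q)) (m a) = pairF3 f g h R2).
  { apply le_antisym.
    - apply pairF_lub; intros p q Hpq. unfold pairF at 1. apply meet_sup_le.
      intros z [y [w [Hyw ->]]]. rewrite <- meet_assoc. apply pairF3_ub.
      exists p, q; split; auto; split; auto. apply le_refl.
    - apply pairF3_lub; intros x y z [p [q [Hpq [Hxp Hyz]]]].
      eapply le_trans; [|apply (pairF_ub f (fun q => pairF g h (m q)) (m a) p q Hpq)].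
      rewrite meet_assoc. apply meet_mono; [apply fh_mono; auto | ].
      apply (pairF_ub g h (m q) y z Hyz). }
  rewrite E1, E2, <- (pairF3_tcl3 f g h R1), <- (pairF3_tcl3 f g h R2); auto.
  apply le_antisym; apply pairF3_mono; intros x y z; apply Hassoc.
Qed.

Lemma unitR_F {F : Frame} (h : Q -> F) a : frame_hom h ->
  pairF h (fun y => h (r (u y))) (m a) = h a.
Proof.
  intros Hh. pose proof (f_equal h (Hunit_r a)) as E. unfold pair_map in E.
  change (h (pairF (fun x => x) (fun y => r (u y)) (m a)) = h a) in E.
  rewrite pairF_comp in E; auto.
Qed.
Lemma unitL_F {F : Frame} (h : Q -> F) a : frame_hom h ->
  pairF (fun x => h (d (u x))) h (m a) = h a.
Proof.
  intros Hh. pose proof (f_equal h (Hunit_l a)) as E. unfold pair_map in E.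
  change (h (pairF (fun x => d (u x)) (fun y => y) (m a)) = h a) in E.
  rewrite pairF_comp in E; auto.
Qed.
Lemma invR_F {F : Frame} (h : Q -> F) a : frame_hom h ->
  pairF h (fun y => h (i y)) (m a) = h (d (u a)).
Proof.
  intros Hh. pose proof (f_equal h (Hinv_r a)) as E. unfold pair_map in E.
  change (h (pairF (fun x => x) i (m a)) = h (d (u a))) in E.
  rewrite pairF_comp in E; auto.
Qed.
Lemma invL_F {F : Frame} (h : Q -> F) a : frame_hom h ->
  pairF (fun x => h (i x)) h (m a) = h (r (u a)).
Proof.
  intros Hh. pose proof (f_equal h (Hinv_l a)) as E. unfold pair_map in E.
  change (h (pairF i (fun y => y) (m a)) = h (r (u a))) in E.
  rewrite pairF_comp in E; auto.
Qed.

Lemma ii x : i (i x) = x.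
Proof.
  set (j := fun x => i (i x)).
  assert (Hj : frame_hom j) by exact (fh_comp i i Hi Hi).
  change (j x = x).
  rewrite <- (unitR_F j x Hj).
  rewrite (pairF_ext j (fun y => j (r (u y))) j (fun y => pairF i (fun z => z) (m y))).
  2: reflexivity.
  2: { intros y. unfold j. rewrite Hir, Hid.
       pose proof (Hinv_l y) as E. unfold pair_map in E. exact (eq_sym E). }
  rewrite <- assoc_F; auto using fh_id, Hi.
  2: { intros c; unfold j; rewrite Hir, Hid; auto. }
  2: { intros c; rewrite Hir; auto. }
  rewrite (pairF_ext (fun p => pairF j i (m p)) (fun z => z) (fun p => d (u p)) (fun z => z)).
  - pose proof (Hunit_l x) as E. unfold pair_map in E. exact E.
  - intros p. unfold j. rewrite (invL_F i p Hi). apply Hir.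
  - reflexivity.
Qed.

End Groupoid.

Section O2.
Variable G : LGData.
Local Notation A := (lg0 G).
Local Notation Q := (lg1 G).
Local Notation d := (lg_d G).
Local Notation r := (lg_r G).
Local Notation ra := (lg_ract G).
Local Notation la := (lg_lact G).

Lemma sat_down S : tsat ra la S -> forall x y x' y', S x y -> fle x' x -> fle y' y -> S x' y'.
Proof. intros H; apply H. Qed.
Lemma sat_supl S : tsat ra la S -> forall (P : Q -> Prop) y, (forall x, P x -> S x y) -> S (fsup P) y.
Proof. intros H; apply H. Qed.
Lemma sat_supr S : tsat ra la S -> forall x (P : Q -> Prop), (forall y, P y -> S x y) -> S x (fsup P).
Proof. intros H; apply H. Qed.
Lemma sat_sat S : tsat ra la S -> forall x a y, S (ra x a) y <-> S x (la a y).
Proof. intros H; apply H. Qed.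

Lemma tcl_sat R : tsat ra la (tcl ra la R).
Proof.
  split; [|split; [|split]].
  - intros x y x' y' H H1 H2 S HS HR. exact (sat_down S HS x y x' y' (H S HS HR) H1 H2).
  - intros P y H S HS HR. apply sat_supl; auto. intros x Px; apply H; auto.
  - intros x P H S HS HR. apply sat_supr; auto. intros y Py; apply H; auto.
  - intros x a y; split; intros H S HS HR; apply (sat_sat S HS); apply H; auto.
Qed.

Lemma meet_sat S T : tsat ra la S -> tsat ra la T -> tsat ra la (fun x y => S x y /\ T x y).
Proof.
  intros HS HT; split; [|split; [|split]].
  - intros x y x' y' [H1 H2] H3 H4; split; eapply sat_down; eauto.
  - intros P y H; split; apply sat_supl; auto; intros x Px; apply H; auto.
  - intros x P H; split; apply sat_supr; auto; intros y Py; apply H; auto.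
  - intros x a y; rewrite (sat_sat S HS), (sat_sat T HT); tauto.
Qed.

Lemma ra_id x a : fle x (r a) -> ra x a = x.
Proof. intros; apply meet_absorb'; auto. Qed.
Lemma la_id a y : fle y (d a) -> la a y = y.
Proof. intros; apply meet_absorb'; auto. Qed.

Lemma heyting_sat S U : tsat ra la S -> tsat ra la U ->
  tsat ra la (fun x y => forall x' y', fle x' x -> fle y' y -> S x' y' -> U x' y').
Proof.
  intros HS HU; split; [|split; [|split]].
  - intros x y x' y' H H1 H2 x'' y'' H3 H4 H5. apply H; eauto using le_trans.
  - intros P y H x' y' H1 H2 H3.
    rewrite <- (meet_absorb x' (fsup P) H1), fdistr.
    apply sat_supl; auto. intros w [z [Pz ->]].
    apply (H z Pz); auto using meet_r. eapply sat_down; eauto using meet_l, le_refl.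
  - intros x P H x' y' H1 H2 H3.
    rewrite <- (meet_absorb y' (fsup P) H2), fdistr.
    apply sat_supr; auto. intros w [z [Pz ->]].
    apply (H z Pz); auto using meet_r. eapply sat_down; eauto using meet_l, le_refl.
  - intros x a y; split.
    + intros H x' y' H1 H2 H3.
      assert (Hy'a : fle y' (d a)) by (eapply le_trans; [exact H2| apply meet_l]).
      assert (Hy'y : fle y' y) by (eapply le_trans; [exact H2| apply meet_r]).
      rewrite <- (la_id a y' Hy'a). apply (sat_sat U HU).
      apply H; auto.
      * unfold lg_ract; apply meet_mono; auto using le_refl.
      * apply (sat_sat S HS). rewrite (la_id a y' Hy'a); auto.
    + intros H x' y' H1 H2 H3.
      assert (Hx'a : fle x' (r a)) by (eapply le_trans; [exact H1| apply meet_l]).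
      assert (Hx'x : fle x' x) by (eapply le_trans; [exact H1| apply meet_r]).
      rewrite <- (ra_id x' a Hx'a). apply (sat_sat U HU).
      apply H; auto.
      * unfold lg_lact; apply meet_mono; auto using le_refl.
      * apply (sat_sat S HS). rewrite (ra_id x' a Hx'a); auto.
Qed.

Definition O2car := {S : Q -> Q -> Prop | tsat ra la S}.
Definition O2le (S T : O2car) : Prop := forall x y, proj1_sig S x y -> proj1_sig T x y.
Definition O2sup (P : O2car -> Prop) : O2car :=
  exist _ (tcl ra la (fun x y => exists S, P S /\ proj1_sig S x y)) (tcl_sat _).
Definition O2meet (S T : O2car) : O2car :=
  exist _ (fun x y => proj1_sig S x y /\ proj1_sig T x y) (meet_sat _ _ (proj2_sig S) (proj2_sig T)).

Lemma O2_ext (S T : O2car) : (forall x y, proj1_sig S x y <-> proj1_sig T x y) -> S = T.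
Proof.
  destruct S as [S HS], T as [T HT]; simpl; intros H.
  assert (S = T).
  { apply functional_extensionality; intros x; apply functional_extensionality; intros y.
    apply propositional_extensionality; auto. }
  subst. f_equal. apply proof_irrelevance.
Qed.

Lemma O2_distr (S : O2car) (P : O2car -> Prop) :
  O2meet S (O2sup P) = O2sup (fun z => exists T, P T /\ z = O2meet S T).
Proof.
  apply O2_ext; intros x y; simpl; split.
  - intros [HSxy Hcl].
    set (U := tcl ra la (fun x y => exists S0, (exists T, P T /\ S0 = O2meet S T) /\ proj1_sig S0 x y)).
    refine (Hcl (fun x y => forall x' y', fle x' x -> fle y' y -> proj1_sig S x' y' -> U x' y') _ _ x y (le_refl _) (le_refl _) HSxy).
    + apply heyting_sat; [apply (proj2_sig S) | apply tcl_sat].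
    + intros x0 y0 [T [PT HT]] x' y' H1 H2 H3. apply tcl_incl.
      exists (O2meet S T); split; [exists T; auto|]. simpl; split; auto.
      eapply sat_down; eauto. apply (proj2_sig T).
  - intros H. apply (H (fun x y => proj1_sig S x y /\ tcl ra la (fun x y => exists S0, P S0 /\ proj1_sig S0 x y) x y)).
    + apply meet_sat; [apply (proj2_sig S)| apply tcl_sat].
    + intros x0 y0 [S0 [[T [PT ->]] [H1 H2]]]; split; auto.
      apply tcl_incl; exists T; auto.
Qed.

Definition O2 : Frame.
Proof.
  refine {| fcar := O2car; fle := O2le; fsup := O2sup; fmeet := O2meet |}.
  - intros S x y; auto.
  - intros S T U H1 H2 x y H; auto.
  - intros S T H1 H2; apply O2_ext; split; auto.
  - intros P S PS x y H. apply tcl_incl. exists S; auto.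
  - intros P T H x y Hxy. apply (Hxy (proj1_sig T) (proj2_sig T)).
    intros u v [S [PS HS]]; apply (H S PS); auto.
  - intros S T U; unfold O2le; simpl; split.
    + intros H; split; intros; apply H; auto.
    + intros [H1 H2] x y H; split; auto.
  - apply O2_distr.
Defined.

Lemma O2_le (S T : O2) : fle S T <-> (forall x y, proj1_sig S x y -> proj1_sig T x y).
Proof. reflexivity. Qed.
Lemma O2_meet (S T : O2) x y : proj1_sig (fmeet S T) x y <-> proj1_sig S x y /\ proj1_sig T x y.
Proof. reflexivity. Qed.

End O2.

Section Open.
Variable G : LGData.
Local Notation A := (lg0 G).
Local Notation Q := (lg1 G).
Local Notation d := (lg_d G).
Local Notation r := (lg_r G).
Local Notation u := (lg_u G).
Local Notation i := (lg_i G).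
Local Notation m := (lg_m G).
Local Notation ra := (lg_ract G).
Local Notation la := (lg_lact G).
Hypothesis HG : localic_groupoid G.
Variable fl : Q -> A.
Hypothesis Hadj : forall x a, fle (fl x) a <-> fle x (d a).
Hypothesis Hfrob : forall x a, fl (fmeet x (d a)) = fmeet (fl x) a.

Let Hd := Hd G HG. Let Hr := Hr G HG. Let Hi := Hi G HG.

Lemma fl_unit x : fle x (d (fl x)). Proof. apply Hadj, le_refl. Qed.
Lemma fl_mono x y : fle x y -> fle (fl x) (fl y).
Proof. intros; apply Hadj; eapply le_trans; eauto using fl_unit. Qed.
Lemma fl_sup (P : Q -> Prop) : fle (fl (fsup P)) (fsup (img fl P)).
Proof.
  apply Hadj. apply sup_lub. intros x Px. eapply le_trans; [apply fl_unit|].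
  apply (fh_mono d Hd). apply sup_ub. exists x; auto.
Qed.
Lemma i_mono x y : fle x y -> fle (i x) (i y). Proof. apply fh_mono; auto. Qed.

Lemma nl1 S : tsat ra la S -> forall p q, S p q <-> S (fmeet (r (fl q)) p) q.
Proof.
  intros HS p q. change (fmeet (r (fl q)) p) with (ra p (fl q)).
  rewrite (sat_sat G S HS), (la_id G); [tauto| apply fl_unit].
Qed.
Lemma p_le_r p : fle p (r (fl (i p))).
Proof.
  rewrite <- (Hid G HG). rewrite <- (ii G HG p) at 1. apply i_mono, fl_unit.
Qed.
Lemma nl2 S : tsat ra la S -> forall p q, S p q <-> S p (fmeet (d (fl (i p))) q).
Proof.
  intros HS p q. change (fmeet (d (fl (i p))) q) with (la (fl (i p)) q).
  rewrite <- (sat_sat G S HS), (ra_id G); [tauto| apply p_le_r].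
Qed.

Definition pi1 (x : Q) : O2 G := exist _ (tcl ra la (fun p q => fle p x)) (tcl_sat G _).
Definition pi2 (y : Q) : O2 G := exist _ (tcl ra la (fun p q => fle q y)) (tcl_sat G _).

Lemma L1 x p q : proj1_sig (pi1 x) p q <-> fle (fmeet (r (fl q)) p) x.
Proof.
  split.
  - intros H. apply (H (fun p q => fle (fmeet (r (fl q)) p) x)).
    + split; [|split; [|split]].
      * intros p0 q0 p' q' H1 H2 H3. eapply le_trans; [|exact H1].
        apply meet_mono; auto. apply (fh_mono r Hr), fl_mono; auto.
      * intros P q0 H1. apply meet_sup_le. auto.
      * intros p0 P H1. eapply le_trans; [apply meet_mono; [|apply le_refl]|].
        { apply (fh_mono r Hr), fl_sup. }
        rewrite (fh_sup r Hr). apply sup_meet_le. intros z [w [[y [Py ->]] ->]]. auto.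
      * intros p0 a q0. rewrite ra_eq, la_eq, (meet_comm (d a) q0), Hfrob, (fh_meet r Hr).
        assert (E : fmeet (r (fl q0)) (fmeet (r a) p0) = fmeet (fmeet (r (fl q0)) (r a)) p0)
          by ac_meet.
        rewrite E; tauto.
    + intros p0 q0 H0. eapply le_trans; [apply meet_r| auto].
  - intros H. apply nl1; [apply tcl_sat|]. apply tcl_incl; auto.
Qed.

Lemma L2 y p q : proj1_sig (pi2 y) p q <-> fle (fmeet (d (fl (i p))) q) y.
Proof.
  split.
  - intros H. apply (H (fun p q => fle (fmeet (d (fl (i p))) q) y)).
    + split; [|split; [|split]].
      * intros p0 q0 p' q' H1 H2 H3. eapply le_trans; [|exact H1].
        apply meet_mono; auto. apply (fh_mono d Hd), fl_mono, i_mono; auto.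
      * intros P q0 H1. eapply le_trans; [apply meet_mono; [|apply le_refl]|].
        { apply (fh_mono d Hd). rewrite (fh_sup i Hi). apply fl_sup. }
        rewrite (fh_sup d Hd). apply sup_meet_le.
        intros z [w [[v [[x [Px ->]] ->]] ->]]. auto.
      * intros p0 P H1. apply meet_sup_le. auto.
      * intros p0 a q0. rewrite ra_eq, la_eq, (fh_meet i Hi), (Hir G HG), (meet_comm (d a) (i p0)), Hfrob,
          (fh_meet d Hd).
        assert (E : fmeet (fmeet (d (fl (i p0))) (d a)) q0 = fmeet (d (fl (i p0))) (fmeet (d a) q0))
          by ac_meet.
        rewrite E; tauto.
    + intros p0 q0 H0. eapply le_trans; [apply meet_r| auto].
  - intros H. apply nl2; [apply tcl_sat|]. apply tcl_incl; auto.
Qed.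

Lemma pi_sup (R : Q -> Q -> Q -> Prop) (P : Q -> Prop) (pi : Q -> O2 G) :
  (forall x p q, proj1_sig (pi x) p q <-> tcl ra la (R x) p q) ->
  (forall x x' p q, fle x x' -> R x p q -> R x' p q) ->
  (forall p q, R (fsup P) p q -> proj1_sig (fsup (img pi P)) p q) ->
  pi (fsup P) = fsup (img pi P).
Proof.
  intros Hpi Hmono Hgen. apply le_antisym.
  - apply O2_le. intros p q H. apply Hpi in H.
    apply (H _ (proj2_sig (fsup (img pi P)))). auto.
  - apply sup_lub. intros S [z [Pz ->]]. apply O2_le. intros p q H.
    apply Hpi. apply Hpi in H. apply (H _ (tcl_sat G _)).
    intros p0 q0 H0. apply tcl_incl. eapply Hmono; [|exact H0]. apply sup_ub; auto.
Qed.

Lemma pi1_hom : frame_hom pi1.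
Proof.
  split; [|split].
  - intros P. apply (pi_sup (fun x p q => fle p x)); [reflexivity| |].
    + intros; eapply le_trans; eauto.
    + intros p q H. rewrite <- (meet_absorb p (fsup P) H), fdistr.
      apply (sat_supl G _ (proj2_sig (fsup (img pi1 P)))).
      intros w [z [Pz ->]]. apply tcl_incl. exists (pi1 z); split; [exists z; auto|].
      apply tcl_incl. apply meet_r.
  - intros x y. apply le_antisym; apply O2_le; intros p q H.
    + apply L1 in H. split; apply L1; eapply le_trans; eauto using meet_l, meet_r.
    + destruct H as [H1 H2]. apply L1 in H1; apply L1 in H2. apply L1.
      apply meet_intro; auto.
  - apply le_antisym; [apply top_ub|]. apply O2_le; intros p q _. apply tcl_incl, top_ub.
Qed.

Lemma pi2_hom : frame_hom pi2.
Proof.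
  split; [|split].
  - intros P. apply (pi_sup (fun y p q => fle q y)); [reflexivity| |].
    + intros; eapply le_trans; eauto.
    + intros p q H. rewrite <- (meet_absorb q (fsup P) H), fdistr.
      apply (sat_supr G _ (proj2_sig (fsup (img pi2 P)))).
      intros w [z [Pz ->]]. apply tcl_incl. exists (pi2 z); split; [exists z; auto|].
      apply tcl_incl. apply meet_r.
  - intros x y. apply le_antisym; apply O2_le; intros p q H.
    + apply L2 in H. split; apply L2; eapply le_trans; eauto using meet_l, meet_r.
    + destruct H as [H1 H2]. apply L2 in H1; apply L2 in H2. apply L2.
      apply meet_intro; auto.
  - apply le_antisym; [apply top_ub|]. apply O2_le; intros p q _. apply tcl_incl, top_ub.
Qed.

Lemma pi12_comp : composable G pi1 pi2.
Proof.
  intros c. apply le_antisym; apply O2_le; intros p q H.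
  - apply (H _ (tcl_sat G _)). intros p0 q0 H0.
    rewrite <- (ra_id G p0 c H0). apply (sat_sat G _ (tcl_sat G _)).
    apply tcl_incl. apply meet_l.
  - apply (H _ (tcl_sat G _)). intros p0 q0 H0.
    rewrite <- (la_id G c q0 H0). apply (sat_sat G _ (tcl_sat G _)).
    apply tcl_incl. apply meet_l.
Qed.

Definition pi2i (y : Q) : O2 G := pi2 (i y).
Lemma pi2i_hom : frame_hom pi2i.
Proof. exact (fh_comp i pi2 Hi pi2_hom). Qed.
Lemma pi22_comp : composable G pi2 pi2i.
Proof. intros c; unfold pi2i; rewrite (Hid G HG); auto. Qed.

Definition PM (a : Q) : O2 G := pairF pi1 pi2 (m a).

Lemma Kid a : pairF PM pi2i (m a) = pi1 a.
Proof.
  unfold PM. rewrite (assoc_F G HG); auto using pi1_hom, pi2_hom, pi2i_hom, pi12_comp, pi22_comp.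
  rewrite (pairF_ext pi1 (fun q => pairF pi2 pi2i (m q)) pi1 (fun q => pi1 (r (u q)))).
  - apply (unitR_F G HG pi1 a pi1_hom).
  - reflexivity.
  - intros q. unfold pi2i. rewrite (invR_F G HG pi2 q pi2_hom). symmetry; apply pi12_comp.
Qed.

Lemma PM_le a x y : proj1_sig (PM a) x y -> m a x y.
Proof.
  pose proof (Hm_sat G HG a) as HS.
  intros H. revert x y H. apply (proj1 (O2_le G (PM a) (exist _ (m a) HS))).
  apply pairF_lub. intros x y Sxy. apply O2_le. intros p q [H1 H2]. simpl.
  apply (nl1 _ HS). apply L1 in H1.
  set (p' := fmeet (r (fl q)) p) in *.
  assert (H2' : proj1_sig (pi2 y) p' q).
  { eapply (sat_down G _ (proj2_sig (pi2 y))); eauto using meet_r, le_refl. }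
  apply L2 in H2'. apply (nl2 _ HS).
  eapply (sat_down G _ HS); eauto.
Qed.

Lemma m_mono a b x y : fle a b -> m a x y -> m b x y.
Proof.
  intros Hab H. rewrite <- (meet_absorb a b Hab) in H.
  apply (Hm_meet G HG) in H. apply H.
Qed.

Lemma PM_mono a b : fle a b -> fle (PM a) (PM b).
Proof. intros; apply pairF_mono; intros; eapply m_mono; eauto. Qed.

Lemma PM_meet a b : fle (fmeet (PM a) (PM b)) (PM (fmeet a b)).
Proof.
  unfold PM at 1. unfold pairF at 1. apply sup_meet_le. intros z [x [y [Hxy ->]]].
  unfold PM at 1. unfold pairF at 1. apply meet_sup_le. intros z [x' [y' [Hxy' ->]]].
  eapply le_trans; [| apply (pairF_ub pi1 pi2 _ (fmeet x x') (fmeet y y'))].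
  - rewrite (fh_meet _ pi1_hom), (fh_meet _ pi2_hom).
    repeat apply meet_intro; eauto 6 using le_trans, meet_l, meet_r.
  - apply (Hm_meet G HG). split.
    + eapply (sat_down G _ (Hm_sat G HG a)); eauto using meet_l.
    + eapply (sat_down G _ (Hm_sat G HG b)); eauto using meet_r.
Qed.

Lemma PM_r b : fle (pi2 (r b)) (PM (r b)).
Proof.
  eapply le_trans; [| apply (pairF_ub pi1 pi2 _ (ftop Q) (r b))].
  - rewrite (fh_top _ pi1_hom), meet_top_l. apply le_refl.
  - apply (Hmr G HG). apply tcl_incl. apply le_refl.
Qed.

Definition Mxy (x y : Q) : Q :=
  fsup (fun z => exists p q, m x p q /\ z = fmeet p (r (fl (fmeet q (i y))))).

Lemma B1 a x y : m a x y -> fle (Mxy x y) a.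
Proof.
  intros Hxy. apply sup_lub. intros z [p [q [Hpq ->]]].
  set (v := fmeet q (i y)).
  assert (Hm : proj1_sig (pi1 a) p v).
  { rewrite <- Kid. apply (proj1 (O2_le G _ _) (pairF_ub PM pi2i (m a) x y Hxy)).
    split.
    - apply (proj1 (O2_le G _ _) (pairF_ub pi1 pi2 (m x) p q Hpq)).
      split; apply tcl_incl; [apply le_refl| apply meet_l].
    - apply tcl_incl; apply meet_r. }
  apply L1 in Hm. rewrite meet_comm; exact Hm.
Qed.

Lemma B2 a x y : fle (Mxy x y) a -> m a x y.
Proof.
  intros Ha. apply PM_le.
  assert (H : fle (fmeet (pi1 x) (pi2 y)) (PM a)).
  { rewrite <- (Kid x). unfold pairF at 1. apply sup_meet_le.
    intros z [p [q [Hpq ->]]].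
    set (w := fmeet (i q) y).
    eapply le_trans; [| eapply le_trans; [apply (PM_meet p (r (fl (i w))))|]].
    - rewrite meet_assoc. apply meet_mono; [apply le_refl|].
      unfold pi2i. rewrite <- (fh_meet _ pi2_hom).
      eapply le_trans; [| apply PM_r]. apply (fh_mono _ pi2_hom).
      rewrite <- (Hid G HG). apply le_trans with (i (i w)).
      { rewrite (ii G HG); apply le_refl. }
      apply i_mono, fl_unit.
    - apply PM_mono. eapply le_trans; [| exact Ha]. apply sup_ub.
      exists p, q; split; auto. unfold w. rewrite (fh_meet i Hi), (ii G HG). reflexivity. }
  apply (proj1 (O2_le G _ _) H). split; apply tcl_incl; apply le_refl.
Qed.

Lemma mult_iff a x y : fle (finf Q (fun z => m z x y)) a <-> m a x y.
Proof.
  split.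
  - intros H. apply B2. eapply le_trans; [|exact H]. apply finf_glb. intros; apply B1; auto.
  - intros; apply finf_lb; auto.
Qed.

End Open.

Lemma frame_iso_id {F : Frame} : frame_iso (fun x : F => x).
Proof. split; [apply fh_id|]. exists (fun x => x); auto. Qed.

Lemma part1 (G : LGData) : open_localic_groupoid G -> lg_iso (GG (OG G)) G.
Proof.
  intros [HG [fl [Hadj Hfrob]]].
  exists (fun a => a), (fun x => x).
  split; [exact frame_iso_id|]. split; [exact frame_iso_id|].
  pose proof (Hi G HG) as Hi'.
  split; [|split; [|split; [|split]]]; simpl.
  - intros a. apply meet_top_r.
  - intros a. rewrite meet_top_r. apply finf_eq.
    + rewrite (Hir G HG). apply le_refl.
    + intros z Hz. rewrite <- (Hid G HG). rewrite <- (ii G HG z). apply (fh_mono _ Hi'); auto.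
  - reflexivity.
  - intros x. apply finf_eq.
    + rewrite (ii G HG). apply le_refl.
    + intros z Hz. rewrite <- (ii G HG z). apply (fh_mono _ Hi'); auto.
  - intros a x y. apply (mult_iff G HG fl Hadj Hfrob).
Qed.

Lemma part2 (Q : GQData) : groupoid_quantale Q -> gq_iso (OG (GG Q)) Q.
Proof.
  intros HQ.
  destruct HQ as [_ [[[Hs_sp [Hs_top [_ Hs_x]]] Hs_eq] [_ [[Hinv [Hb1 Hb2]] _]]]].
  destruct Hinv as [[[_ [Hla2 [_ [_ [Hla_top [_ [Hra_top _]]]]]]] _] [Hinv_sp [Hinv2 [_ Hinv_act]]]].
  exists (fun a => a), (fun x => x).
  split; [exact frame_iso_id|]. split; [exact frame_iso_id|].
  assert (inv_mono : forall x y, fle x y -> fle (q_inv Q x) (q_inv Q y))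
    by (apply sp_mono; auto).
  assert (inv_top : q_inv Q (ftop _) = ftop _).
  { apply le_antisym; [apply top_ub|]. rewrite <- (Hinv2 (ftop _)) at 1.
    apply inv_mono, top_ub. }
  split; [|split; [|split; [|split; [|split]]]]; simpl.
  - intros a x. rewrite Hb1, meet_top_l. reflexivity.
  - intros x a.
    assert (E : q_inv Q (q_lact Q a (ftop _)) = q_ract Q (ftop _) a).
    { rewrite <- (Hra_top (ftop _)) at 1. rewrite Hinv_act, inv_top, Hla_top. reflexivity. }
    rewrite E, Hb2, meet_top_l. reflexivity.
  - intros x y. apply finf_eq; [apply le_refl| auto].
  - intros x. apply finf_eq.
    + rewrite Hinv2; apply le_refl.
    + intros z Hz. rewrite <- (Hinv2 z). apply inv_mono; auto.
  - intros x. apply finf_eq.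
    + rewrite <- (Hs_x x) at 1. apply (sp_mono _ (Hla2 _)). apply top_ub.
    + intros z Hz. eapply le_trans; [apply (sp_mono _ Hs_sp _ _ Hz)|].
      rewrite Hs_eq. apply meet_l.
  - reflexivity.
Qed.

Theorem theorem5p14 :
  (forall G : LGData, open_localic_groupoid G -> lg_iso (GG (OG G)) G) /\
  (forall Q : GQData, groupoid_quantale Q -> gq_iso (OG (GG Q)) Q).
Proof. split; [exact part1 | exact part2]. Qed.
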